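(* Let $\mathbb{X}$ be a smooth reflexive real Banach space with the Kadets–Klee property and $\mathbb{Y}$ a smooth real Banach space. Let $T\in\mathbb{L}(\mathbb{X},\mathbb{Y})$ be of rank one with $\|T\|=1$. If $M_T=\{\pm x\}$ and $(x,Tx)$ is a CPP, then $T$ is not an extreme contraction.
   Context: All Banach spaces are real and of dimension greater than $1$. $\mathbb{X}$ has the Kadets–Klee property if whenever $x_n\rightharpoonup x$ weakly and $\|x_n\|\to\|x\|$, then $x_n\to x$ in norm. $M_T=\{x\in S_{\mathbb{X}}:\|Tx\|=\|T\|\}$. A norm one $T$ is an extreme contraction if it is an extreme point of the closed unit ball of $\mathbb{L}(\mathbb{X},\mathbb{Y})$. $B(x,r)=\{u:\|u-x\|<r\}$. $x\perp_B y$ means $\|x+\lambda y\|\ge\|x\|$ for all real $\lambda$; $x^\perp=\{y:x\perp_By\}$. For $x\in S_{\mathbb{X}}$, $y\in S_{\mathbb{Y}}$, $(x,y)$ is a CPP if there exist $r>0,\mu>0$ such that for all $z\in x^\perp\cap S_{\mathbb{X}}$, all $w\in y^\perp\cap S_{\mathbb{Y}}$ and all $a,b\in\mathbb{R}$, $ax+bz\in B(x,r)\cap S_{\mathbb{X}}$ implies $\|ay+b\mu w\|\le1$. *)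

(* Defs.v *)
From HB Require Import structures.
From mathcomp Require Import all_boot all_order all_algebra.
From mathcomp Require Import all_classical all_reals all_analysis.
Set Implicit Arguments. Unset Strict Implicit. Unset Printing Implicit Defensive.
Import Order.TTheory GRing.Theory Num.Theory.
Import numFieldNormedType.Exports.
Local Open Scope classical_set_scope.
Local Open Scope ring_scope.

Section Banach.
Variable R : realType.

Definition is_linear (X Y : normedModType R) (f : X -> Y) : Prop :=
  forall (a : R) (u v : X), f (a *: u + v) = a *: f u + f v.

Definition bdd_lin (X Y : normedModType R) (f : X -> Y) : Prop :=
  is_linear f /\ exists k : R, forall u, `|f u| <= k * `|u|.

Definition opnorm (X Y : normedModType R) (f : X -> Y) : R :=
  sup [set `|f u| | u in [set u : X | `|u| <= 1]].

Definition in_dual (X : normedModType R) (f : X -> R^o) : Prop := bdd_lin f.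

Definition dim_gt1 (X : normedModType R) : Prop :=
  exists u v : X, forall a b : R, a *: u + b *: v = 0 -> a = 0 /\ b = 0.

Definition smooth_space (X : normedModType R) : Prop :=
  forall x : X, `|x| = 1 ->
    exists f, [/\ in_dual f, opnorm f = 1, f x = 1 &
      forall g, in_dual g -> opnorm g = 1 -> g x = 1 -> g = f].

(* reflexive: the canonical embedding X -> X** is onto *)
Definition reflexive_space (X : normedModType R) : Prop :=
  forall Phi : (X -> R^o) -> R,
    (forall (a : R) f g, in_dual f -> in_dual g ->
        Phi (fun u => a * f u + g u) = a * Phi f + Phi g) ->
    (exists k : R, forall f, in_dual f -> `|Phi f| <= k * opnorm f) ->
    exists x : X, forall f, in_dual f -> Phi f = f x.

Definition weak_cvg (X : normedModType R) (u : nat -> X) (x : X) : Prop :=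
  forall f, in_dual f -> (fun n => f (u n)) @ \oo --> f x.

Definition kadets_klee (X : normedModType R) : Prop :=
  forall (u : nat -> X) (x : X), weak_cvg u x ->
    (fun n => `|u n|) @ \oo --> `|x| -> u @ \oo --> x.

Definition rank_one (X Y : normedModType R) (T : X -> Y) : Prop :=
  (exists u, T u != 0) /\ exists y0 : Y, forall u, exists c : R, T u = c *: y0.

Definition M_T (X Y : normedModType R) (T : X -> Y) : set X :=
  [set u | `|u| = 1 /\ `|T u| = opnorm T].

Definition extreme_contraction (X Y : normedModType R) (T : X -> Y) : Prop :=
  opnorm T = 1 /\
  forall (S1 S2 : X -> Y) (t : R), bdd_lin S1 -> bdd_lin S2 ->
    opnorm S1 <= 1 -> opnorm S2 <= 1 -> 0 < t < 1 ->
    (forall u, T u = t *: S1 u + (1 - t) *: S2 u) -> S1 = S2.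

Definition bj_orth (X : normedModType R) (x y : X) : Prop :=
  forall l : R, `|x| <= `|x + l *: y|.

Definition CPP (X Y : normedModType R) (x : X) (y : Y) : Prop :=
  `|x| = 1 /\ `|y| = 1 /\
  exists r mu : R, [/\ 0 < r, 0 < mu &
    forall (z : X) (w : Y) (a b : R),
      bj_orth x z -> `|z| = 1 -> bj_orth y w -> `|w| = 1 ->
      `|a *: x + b *: z - x| < r -> `|a *: x + b *: z| = 1 ->
      `|a *: y + (b * mu) *: w| <= 1].

End Banach.

(* Main.v *)
Require Import Defs.
From HB Require Import structures.
From mathcomp Require Import all_boot all_order all_algebra.
From mathcomp Require Import all_classical all_reals all_analysis.
From mathcomp Require Import ring lra.
Import Order.TTheory GRing.Theory Num.Theory.
Import numFieldNormedType.Exports.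
Local Open Scope classical_set_scope.
Local Open Scope ring_scope.
Set Implicit Arguments. Unset Strict Implicit. Unset Printing Implicit Defensive.

Section Helpers.
Variable R : realType.

Section Lin.
Variables (X Y : normedModType R) (f : X -> Y).
Hypothesis lf : is_linear f.

Lemma lin0 : f 0 = 0.
Proof.
have := lf 1 0 0; rewrite !scale1r addr0 => H.
by apply/esym/(addrI (f 0)); rewrite addr0 -H.
Qed.

Lemma linZ a u : f (a *: u) = a *: f u.
Proof. by have := lf a u 0; rewrite !addr0 lin0 addr0. Qed.

Lemma linD u v : f (u + v) = f u + f v.
Proof. by have := lf 1 u v; rewrite !scale1r. Qed.

Lemma linN u : f (- u) = - f u.
Proof. by rewrite -scaleN1r linZ scaleN1r. Qed.

Lemma linB u v : f (u - v) = f u - f v.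
Proof. by rewrite linD linN. Qed.
End Lin.

Section Opnorm.
Variables (X Y : normedModType R) (f : X -> Y).
Hypothesis bf : bdd_lin f.

Lemma opnorm_hasub : has_ubound [set `|f u| | u in [set u : X | `|u| <= 1]].
Proof.
case: bf => _ [k Hk]; exists `|k| => _ [u Hu <-].
apply: (le_trans (Hk u)); apply: (le_trans (ler_norm _)).
rewrite normrM normr_id -[leRHS]mulr1; apply: ler_wpM2l => //.
Qed.

Lemma opnorm_le u : `|f u| <= opnorm f * `|u|.
Proof.
case: bf => lf _.
have [->|u0] := eqVneq u 0; first by rewrite (lin0 lf) !normr0 mulr0.
have nu : 0 < `|u| by rewrite normr_gt0.
set v := `|u|^-1 *: u.
have nv : `|v| = 1 by rewrite normrZ ger0_norm ?invr_ge0 // mulVf // gt_eqF.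
have : `|f v| <= opnorm f.
  by apply: ub_le_sup; [exact: opnorm_hasub | exists v => //=; rewrite nv].
rewrite /v linZ // normrZ ger0_norm ?invr_ge0 // => H.
by rewrite -ler_pdivrMr // mulrC.
Qed.

Lemma opnorm_ge0 : 0 <= opnorm f.
Proof.
case: bf => lf _.
apply: (le_trans _ (ub_le_sup opnorm_hasub _)); last by exists 0 => //=; rewrite normr0.
by [].
Qed.

Lemma opnorm_le1 : (forall u, `|u| = 1 -> `|f u| <= 1) -> opnorm f <= 1.
Proof.
case: bf => lf _ H.
apply: ge_sup; first by exists `|f 0|, 0 => //=; rewrite normr0.
move=> _ [u Hu <-].
have [->|u0] := eqVneq u 0; first by rewrite (lin0 lf) normr0.
have nu : 0 < `|u| by rewrite normr_gt0.
have := H (`|u|^-1 *: u).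
rewrite normrZ ger0_norm ?invr_ge0 // mulVf ?gt_eqF // => /(_ erefl).
rewrite linZ // normrZ ger0_norm ?invr_ge0 // => H1.
have : `|f u| <= `|u| by rewrite -[leRHS]mulr1 -ler_pdivrMl.
move=> H2; exact: le_trans H2 Hu.
Qed.
End Opnorm.

Lemma ultra_bdd_cvg (G : set_system nat) (UG : UltraFilter G) (s : nat -> R) (M : R) :
  (forall n, `|s n| <= M) -> exists l : R, `|l| <= M /\ s @ G --> l.
Proof.
move=> Hs.
have FA : (s @ G) [set` `[-M, M]].
  apply: (@filterS _ G _ setT); last exact: filterT; move=> n _ /=.
  by rewrite in_itv /= -ler_norml.
have [p [Hp Cp]] := @segment_compact R (-M) M (s @ G) _ FA.
exists p; split; first by move: Hp; rewrite /= in_itv /= -ler_norml.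
move=> N Np.
case: (in_ultra_setVsetC (s @^-1` N) UG) => // HC.
have [q [nq qq]] := Cp (~` N) N HC Np.
by [].
Qed.

Lemma weak_lim (X : normedModType R) (v : nat -> X) (x : X) (phi : X -> R^o) :
  smooth_space X -> reflexive_space X -> in_dual phi ->
  (forall n, `|v n| = 1) ->
  (fun n => phi (v n)) @ \oo --> (1 : R^o) ->
  (forall u, `|u| <= 1 -> phi u = 1 -> u = x) ->
  weak_cvg v x.
Proof.
move=> sX rX dphi nv cphi uniq g dg.
apply: contrapT => ng.
have [eps [eps0 Neps]] : exists eps : R, 0 < eps /\
    ~ (\forall n \near \oo, `|g x - g (v n)| < eps).
  apply: contrapT => H; apply: ng; apply/cvgrPdist_lt => e e0.
  by apply: contrapT => He; apply: H; exists e.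
set A := [set n | ~ `|g x - g (v n)| < eps].
have F0P : ProperFilter (within A \oo).
  apply: Build_ProperFilter.
  move=> H; have H1 : \forall n \near \oo, ~ A n := H.
  apply: Neps; apply: filterS H1 => n /= HA.
  by apply: contrapT => Hn; exact: HA Hn.
have [G [UG sG]] := ultraFilterLemma F0P.
have Ginf : forall P, (\forall n \near \oo, P n) -> G P.
  by move=> P HP; apply: sG; apply: filterS HP => n Pn _.
have GA : G A.
  by apply: sG; apply: nearW => n.
have Hl : forall f, in_dual f ->
    exists l : R, `|l| <= opnorm f /\ (fun n => f (v n)) @ G --> l.
  move=> f df; apply: ultra_bdd_cvg => n.
  by have := opnorm_le df (v n); rewrite nv mulr1.
pose Phi (f : X -> R^o) : R := lim ((fun n => f (v n)) @ G).
have HPhi : forall f, in_dual f ->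
    (fun n => f (v n)) @ G --> Phi f /\ `|Phi f| <= opnorm f.
  move=> f df; have [l [l1 l2]] := Hl f df.
  by rewrite /Phi (cvg_lim _ l2).
have [x' Hx'] : exists x' : X, forall f, in_dual f -> Phi f = f x'.
  apply: rX.
    move=> a f h df dh.
    have [c1 _] := HPhi f df; have [c2 _] := HPhi h dh.
    apply: cvg_lim => //.
    apply: (@cvgD _ _ _ _ _ (fun n => a * f (v n)) (fun n => h (v n))) => //.
    exact: cvgMl_tmp.
  by exists 1 => f df; rewrite mul1r; exact: (HPhi f df).2.
have phix' : phi x' = 1.
  rewrite -Hx' //; apply: cvg_lim => //.
  by move=> P /cphi; exact: Ginf.
have x'0 : x' != 0.
  by apply/eqP => x0; move: phix'; rewrite x0 (lin0 dphi.1) => /eqP; rewrite eq_sym oner_eq0.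
have nx' : 0 < `|x'| by rewrite normr_gt0.
have [gx [dgx ngx gx1 _]] : exists gx, [/\ in_dual gx, opnorm gx = 1,
    gx (`|x'|^-1 *: x') = 1 &
    forall g, in_dual g -> opnorm g = 1 -> g (`|x'|^-1 *: x') = 1 -> g = gx].
  apply: sX.
  by rewrite normrZ ger0_norm ?invr_ge0 // mulVf // gt_eqF.
have gxx : gx x' = `|x'|.
  move: gx1; rewrite (linZ dgx.1) => H.
  have H' : `|x'|^-1 * gx x' = 1 := H.
  by rewrite -[gx x']mul1r -(@mulfV _ `|x'|) ?gt_eqF // -mulrA H' mulr1.
have le1 : `|x'| <= 1.
  rewrite -gxx -Hx' // -ngx.
  exact: le_trans (ler_norm _) (HPhi gx dgx).2.
have xx : x' = x by apply: uniq.
have [c _] := HPhi g dg.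
have := Hx' g dg; rewrite xx => Pg.
move/cvgrPdist_lt: c => /(_ eps eps0); rewrite Pg => H.
have [n [Hn1 Hn2]] := filter_ex (filterI GA H).
exact: Hn1 Hn2.
Qed.


Lemma ker_nonzero (X : normedModType R) (f : X -> R^o) (e : X) :
  dim_gt1 X -> is_linear f -> f e = 1 -> exists v, v != 0 /\ f v = 0.
Proof.
move=> [p [q Hpq]] lf fe.
apply: contrapT => H.
have key : forall v, v = f v *: e.
  move=> v; apply/eqP; rewrite -subr_eq0; apply/negPn/negP => nz.
  apply: H; exists (v - f v *: e); split => //.
  rewrite (linB lf) (linZ lf) fe.
  by rewrite /GRing.scale /= mulr1 subrr.
have := Hpq (f q) (- f p).
rewrite {1}(key p) {2}(key q) scalerA scaleNr scalerA mulrC subrr => /(_ erefl).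
move=> [fq /eqP]; rewrite oppr_eq0 => /eqP fp.
have p0 : p = 0 by rewrite (key p) fp scale0r.
have := Hpq 1 0; rewrite p0 scaler0 scale0r addr0 => /(_ erefl) [] /eqP.
by rewrite oner_eq0.
Qed.

Lemma smooth_norming (X : normedModType R) (v : X) :
  smooth_space X -> v != 0 ->
  exists g : X -> R^o, [/\ in_dual g, opnorm g = 1 & g v = `|v|].
Proof.
move=> sX v0.
have nv : 0 < `|v| by rewrite normr_gt0.
have n1 : `|(`|v|^-1 *: v)| = 1.
  by rewrite normrZ ger0_norm ?invr_ge0 // mulVf // gt_eqF.
have [g [dg ng g1 _]] := sX _ n1.
exists g; split => //.
move: g1; rewrite (linZ dg.1) => H.
have H' : `|v|^-1 * g v = 1 := H.
by rewrite -[g v]mul1r -(@mulfV _ `|v|) ?gt_eqF // -mulrA H' mulr1.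
Qed.

Lemma conv_bound (Y : normedModType R) (p q : Y) (m c : R) :
  0 < m -> `|p + m *: q| <= 1 -> `|p + (- m) *: q| <= 1 -> `|c| <= m ->
  `|p + c *: q| <= 1.
Proof.
move=> m0 h1 h2 hc.
have /andP[hc1 hc2] : -m <= c <= m by rewrite -ler_norml.
have cm1 : c / m <= 1 by rewrite ler_pdivrMr // mul1r.
have cm2 : -1 <= c / m by rewrite ler_pdivlMr // mulN1r.
set l := (1 + c / m) / 2.
have l0 : 0 <= l by rewrite /l; lra.
have l1 : 0 <= 1 - l by rewrite /l; lra.
have -> : p + c *: q = l *: (p + m *: q) + (1 - l) *: (p + (- m) *: q).
  rewrite !scalerDr !scalerA addrACA -scalerDl.
  rewrite subrKC scale1r -scalerDl; congr (_ + _ *: _).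
  rewrite /l; field; exact: lt0r_neq0.
clearbody l; apply: le_trans (ler_normD _ _) _.
rewrite !normrZ (ger0_norm l0) (ger0_norm l1).
have : l * `|p + m *: q| <= l by rewrite -[leRHS]mulr1 ler_wpM2l.
have : (1 - l) * `|p + - m *: q| <= 1 - l by rewrite -[leRHS]mulr1 ler_wpM2l.
lra.
Qed.

Lemma slice_lemma (X : normedModType R) (phi : X -> R^o) (x : X) :
  smooth_space X -> reflexive_space X -> kadets_klee X -> in_dual phi ->
  `|x| = 1 -> (forall u, `|u| <= 1 -> phi u = 1 -> u = x) ->
  (forall u, `|phi u| <= `|u|) ->
  forall r : R, 0 < r -> exists2 d : R, 0 < d & forall u, `|u| = 1 ->
    r <= `|u - x| -> r <= `|u + x| -> `|phi u| <= 1 - d.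
Proof.
move=> sX rX kX dphi nx uniq nphi r r0.
apply: contrapT => H.
have Hn : forall n : nat, exists u, [/\ `|u| = 1, r <= `|u - x|, r <= `|u + x|
    & 1 - n.+1%:R^-1 < `|phi u|].
  move=> n; apply: contrapT => Hn; apply: H; exists n.+1%:R^-1.
    by rewrite invr_gt0 ltr0Sn.
  move=> u nu h1 h2; rewrite leNgt; apply/negP => Hlt; apply: Hn; by exists u.
have [u Hu] := choice Hn.
pose v n := if 0 <= phi (u n) then u n else - u n.
have Pv : forall n, [/\ `|v n| = 1, r <= `|v n - x| & 1 - n.+1%:R^-1 < phi (v n)].
  move=> n; case: (Hu n) => n1 h1 h2 h3; rewrite /v; case: ifP => hp.
    by rewrite ger0_norm in h3.
  rewrite normrN -opprD normrN (linN dphi.1); split => //.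
  have hn : phi (u n) < 0 by rewrite ltNge hp.
  by rewrite ltr0_norm in h3.
have nv : forall n, `|v n| = 1 by move=> n; case: (Pv n).
have cv : (fun n => phi (v n)) @ \oo --> (1 : R^o).
  apply/cvgrPdist_lt => e e0.
  have := near_infty_natSinv_lt (PosNum e0).
  apply: filterS => n /= hn.
  case: (Pv n) => n1 _ h3.
  have : phi (v n) <= 1 by rewrite -n1; exact: le_trans (ler_norm _) (nphi _).
  move=> h4.
  rewrite ger0_norm; last by rewrite subr_ge0.
  apply: lt_trans hn; move: h3; by rewrite !ltrBlDr addrC.
have wk := weak_lim sX rX dphi nv cv uniq.
have cn : (fun n => `|v n|) @ \oo --> `|x|.
  have -> : (fun n => `|v n|) = (fun=> `|x|) by apply: funext => n; rewrite nv nx.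
  exact: cvg_cst.
have := kX _ _ wk cn.
move/cvgrPdist_lt => /(_ r r0) E.
have [n En] := filter_ex E.
case: (Pv n) => _ h _.
by move: h; rewrite distrC leNgt En.
Qed.


Lemma lin_comb (X Y : normedModType R) (T : X -> Y) (k : X -> R^o) (w : Y) :
  bdd_lin T -> bdd_lin k -> bdd_lin (fun u => T u + k u *: w).
Proof.
move=> [lT [a Ha]] [lk [b Hb]]; split.
  move=> c u v; rewrite lT lk scalerDl -scalerA scalerDr.
  by rewrite addrACA.
exists (a + b * `|w|) => u.
apply: le_trans (ler_normD _ _) _; rewrite normrZ mulrDl.
apply: lerD => //; rewrite mulrAC; apply: ler_wpM2r => //.
Qed.

Lemma lin_scale (X : normedModType R) (k : X -> R^o) (c : R) :
  bdd_lin k -> bdd_lin (fun u => (c * k u : R^o)).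
Proof.
move=> [lk [b Hb]]; split.
  move=> a u v; rewrite lk /GRing.scale /= mulrDr mulrCA //.
exists (`|c| * b) => u; rewrite normrM -mulrA; apply: ler_wpM2l => //.
Qed.


Section Main.
Variables (X Y : normedModType R) (T : X -> Y) (x : X).
Hypotheses (dX : dim_gt1 X) (dY : dim_gt1 Y) (sX : smooth_space X)
  (rX : reflexive_space X) (kX : kadets_klee X) (sY : smooth_space Y)
  (bT : bdd_lin T) (r1 : rank_one T) (nT : opnorm T = 1)
  (MT : M_T T = [set x; - x]) (cpp : CPP x (T x)).

Lemma main_res : ~ extreme_contraction T.
Proof.
move=> [_ ext].
have lT := bT.1.
have [nx nTx] : `|x| = 1 /\ `|T x| = 1.
  have : M_T T x by rewrite MT; left.
  by case => ->; rewrite nT.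
set y := T x.
have [gY [dgY ngY gYy _]] := sY nTx.
pose phi u : R^o := gY (T u).
have nphi : forall u, `|phi u| <= `|u|.
  move=> u; apply: le_trans (opnorm_le dgY _) _; rewrite ngY mul1r.
  by have := opnorm_le bT u; rewrite nT mul1r.
have dphi : in_dual phi.
  split; last by exists 1 => u; rewrite mul1r.
  by move=> a u v; rewrite /phi lT dgY.1.
have phix : phi x = 1 := gYy.
have Tphi : forall u, T u = phi u *: y.
  case: r1 => _ [y0 Hy0].
  have [cx Hcx] := Hy0 x.
  have cx0 : cx != 0.
    apply/eqP => c0; move: nTx; rewrite Hcx c0 scale0r normr0 => /eqP.
    by rewrite eq_sym oner_eq0.
  move=> u; have [cu Hcu] := Hy0 u.
  have Tu : T u = (cu / cx) *: y by rewrite /y Hcx scalerA divfK.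
  rewrite /phi Tu (linZ dgY.1) gYy.
  by rewrite /GRing.scale /= mulr1.
have nTu : forall u, `|T u| = `|phi u|.
  by move=> u; rewrite Tphi normrZ nTx mulr1.
have uniq : forall u, `|u| <= 1 -> phi u = 1 -> u = x.
  move=> u nu pu.
  have nu1 : `|u| = 1.
    by apply/le_anti; rewrite nu /=; have := nphi u; rewrite pu normr1.
  have : M_T T u by split => //; rewrite nTu pu normr1 nT.
  rewrite MT; case=> hu; first exact: hu.
  move: pu; rewrite hu /phi (linN lT) (linN dgY.1) gYy => h.
  have h' : (-1 : R) = 1 := h.
  exfalso; lra.
have [w0 [w00 gw0]] := ker_nonzero dY dgY.1 gYy.
have nw0 : 0 < `|w0| by rewrite normr_gt0.
set w := `|w0|^-1 *: w0.
have nw : `|w| = 1 by rewrite normrZ ger0_norm ?invr_ge0 // mulVf // gt_eqF.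
have gw : gY w = 0.
  by rewrite /w (linZ dgY.1) gw0 /GRing.scale /= mulr0.
have orth : forall w', gY w' = 0 -> bj_orth y w'.
  move=> w' g0 l; rewrite nTx.
  have : gY (y + l *: w') = 1.
    by rewrite (linD dgY.1) (linZ dgY.1) g0 gYy /GRing.scale /= mulr0 addr0.
  move=> h; have := opnorm_le dgY (y + l *: w'); rewrite ngY mul1r h normr1.
  done.
have orthw : bj_orth y w by apply: orth.
have orthmw : bj_orth y (- w) by apply: orth; rewrite (linN dgY.1) gw oppr0.
have [z [z0 phiz]] := ker_nonzero dX dphi.1 phix.
have [gz [dgz ngz gzz]] := smooth_norming sX z0.
pose h u : R^o := gz (u - phi u *: x).
have dh : bdd_lin h.
  split.
    move=> a u v; rewrite /h (linD dphi.1) (linZ dphi.1).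
    rewrite -(linZ dgz.1) -(linD dgz.1); congr (gz _).
    rewrite scalerDl (_ : (a *: phi u : R^o) = a * phi u) //.
    by rewrite -scalerA scalerBr opprD addrACA.
  exists 2 => u; apply: le_trans (opnorm_le dgz _) _; rewrite ngz mul1r.
  apply: le_trans (ler_normB _ _) _; rewrite normrZ nx mulr1.
  by have := nphi u; lra.
have nh : forall u, `|h u| <= `|u - phi u *: x|.
  by move=> u; have := opnorm_le dgz (u - phi u *: x); rewrite ngz mul1r.
have hz : h z = `|z| by rewrite /h phiz scale0r subr0.
case: cpp => _ [_ [r [mu [r0 mu0 Hc]]]].
have near : forall u, `|u| = 1 -> `|u - x| < r ->
    forall c, `|c| <= mu * `|u - phi u *: x| -> `|T u + c *: w| <= 1.
  move=> u nu ur c hc.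
  pose b := `|u - phi u *: x|.
  have {}hc : `|c| <= mu * b := hc.
  have [b0|b0] := eqVneq b 0.
    move: hc; rewrite b0 mulr0 normr_le0 => /eqP ->.
    by rewrite scale0r addr0 nTu -nu; exact: nphi.
  have bp : 0 < b by rewrite lt0r b0 normr_ge0.
  set z' := b^-1 *: (u - phi u *: x).
  have nz' : `|z'| = 1.
    by rewrite normrZ ger0_norm ?invr_ge0 ?ltW //; exact: (mulVf b0).
  have phiz' : phi z' = 0.
    rewrite /z' (linZ dphi.1) (linB dphi.1) (linZ dphi.1) phix.
    by rewrite /GRing.scale /= mulr1 subrr mulr0.
  have oz : bj_orth x z'.
    move=> l; rewrite nx.
    have : phi (x + l *: z') = 1.
      by rewrite (linD dphi.1) (linZ dphi.1) phiz' phix /GRing.scale /= mulr0 addr0.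
    by move=> e; have := nphi (x + l *: z'); rewrite e normr1.
  have ue : phi u *: x + b *: z' = u.
    by rewrite /z' scalerA mulfV // scale1r addrC subrK.
  have H1 := Hc z' w (phi u) b oz nz' orthw nw.
  have H2 := Hc z' (- w) (phi u) b oz nz' orthmw.
  rewrite normrN in H2.
  rewrite ue in H1 H2.
  have := H1 ur nu; have := H2 nw ur nu.
  rewrite scalerN -scaleNr => K2 K1.
  rewrite Tphi -/y.
  apply: (@conv_bound _ _ _ (b * mu)) => //.
  - exact: mulr_gt0.
  - by rewrite mulrC.
have [d d0 Hd] := slice_lemma sX rX kX dphi nx uniq nphi r0.
pose eps := Num.min mu (d / 2).
have e0 : 0 < eps by rewrite lt_min mu0 divr_gt0.
have emu : eps <= mu by rewrite ge_min lexx.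
have ed : eps <= d / 2 by rewrite ge_min lexx orbT.
have key : forall u, `|u| = 1 -> forall c, `|c| <= eps * `|h u| ->
    `|T u + c *: w| <= 1.
  move=> u nu c hc.
  have hc' : `|c| <= mu * `|u - phi u *: x|.
    apply: le_trans hc _; apply: ler_pM; [exact: ltW|exact: normr_ge0|exact: emu|exact: nh].
  have [ur|ur] := ltP `|u - x| r; first exact: near.
  have [ur'|ur'] := ltP `|u + x| r.
    have nu' : `|- u| = 1 by rewrite normrN.
    have ur2 : `|- u - x| < r by rewrite -opprD normrN.
    have := near _ nu' ur2 (- c).
    have eq1 : T (-u) + (-c) *: w = - (T u + c *: w).
      by rewrite (linN lT) scaleNr opprD.
    have eq2 : -u - phi (-u) *: x = - (u - phi u *: x).
      by rewrite (linN dphi.1) scaleNr opprK opprB; exact: addrC.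
    by rewrite eq1 eq2 !normrN => H; exact: H hc'.
  have := Hd u nu ur ur'.
  move=> hp.
  apply: le_trans (ler_normD _ _) _.
  rewrite normrZ nw mulr1 nTu.
  have h2 : `|h u| <= 2.
    apply: le_trans (nh u) _; apply: le_trans (ler_normB _ _) _.
    rewrite normrZ nx mulr1 nu; have := nphi u; rewrite nu; lra.
  have : eps * `|h u| <= eps * 2 by apply: ler_wpM2l => //; exact: ltW.
  lra.
pose S1 u := T u + (eps * h u) *: w.
pose S2 u := T u + (- (eps * h u)) *: w.
have bS1 : bdd_lin S1 by apply: lin_comb => //; exact: lin_scale.
have bS2 : bdd_lin S2.
  apply: lin_comb => //.
  have := lin_scale (- eps) dh.
  by congr bdd_lin; apply: funext => u; rewrite mulNr.
have nS1 : opnorm S1 <= 1.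
  apply: opnorm_le1 => // u nu; apply: key => //.
  by rewrite normrM ger0_norm // ltW.
have nS2 : opnorm S2 <= 1.
  apply: opnorm_le1 => // u nu; apply: key => //.
  by rewrite normrN normrM ger0_norm // ltW.
have := ext S1 S2 (2^-1) bS1 bS2 nS1 nS2.
have t0 : 0 < (2^-1 : R) < 1 by apply/andP; split; lra.
move=> /(_ t0) E.
have E1 : S1 = S2.
  apply: E => u; rewrite /S1 /S2.
  rewrite (_ : 1 - 2^-1 = 2^-1 :> R); last by lra.
  rewrite -scalerDr addrACA -scalerDl subrr scale0r addr0 scalerDr -scalerDl.
  have -> : (2^-1 + 2^-1 : R) = 1 by lra.
  by rewrite scale1r.
have H := congr1 (fun f => f z) E1; rewrite /S1 /S2 /= in H.
move/addrI: H; rewrite hz => H.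
have : (eps * `|z| + eps * `|z|) *: w = 0.
  by rewrite scalerDl {2}H scaleNr subrr.
move/eqP; rewrite scaler_eq0 => /orP [].
  have : 0 < `|z| by rewrite normr_gt0.
  move=> zp /eqP h0.
  have : 0 < eps * `|z| by apply: mulr_gt0.
  lra.
move=> /eqP w0'; move: nw; rewrite w0' normr0 => /eqP.
by rewrite eq_sym oner_eq0.
Qed.
End Main.
End Helpers.

Unset Implicit Arguments.

Theorem mainTheorem7 (R : realType)
  (X Y : completeNormedModType R) (T : X -> Y) (x : X) :
  dim_gt1 X -> dim_gt1 Y ->
  smooth_space X -> reflexive_space X -> kadets_klee X -> smooth_space Y ->
  bdd_lin T -> rank_one T -> opnorm T = 1 ->
  M_T T = [set x; - x] ->
  CPP x (T x) ->
  ~ extreme_contraction T.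
Proof.
intros; eapply main_res; eassumption.
Qed.
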